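(* Let $M\ge 1$ be an integer and let $H>0$, $D>0$, $x\in\mathbb{R}$, $\beta_0>0$, $\sigma^2>0$, $P_{\max}>0$, $\tilde{\Gamma}>0$, $\lambda>0$. Let $\bm{a}_u=\bm{a}(x,\bm{u})\in\mathbb{C}^M$ and $\bm{a}_v=\bm{a}(x,\bm{v})\in\mathbb{C}^M$ be the transmit array response vectors toward the user and the target, let $\bm{h}_c=\sqrt{\tfrac{\beta_0}{x^2+H^2}}\,e^{j\phi}\,\bm{a}_u$ for a real phase $\phi$, and consider the problem $$\max_{\bm{w}\in\mathbb{C}^M}\ \frac{|\bm{h}_c^H\bm{w}|^2}{\sigma^2}\quad\text{s.t.}\quad \frac{|\bm{a}_v^H\bm{w}|^2}{(D-x)^2+H^2}\ge\tilde{\Gamma},\qquad \|\bm{w}\|^2\le P_{\max}.$$ Assume this problem is feasible, i.e. $\frac{MP_{\max}}{(D-x)^2+H^2}\ge\tilde{\Gamma}$. Set $\gamma_0=\beta_0/\sigma^2$ and $\rho=\frac{|\bm{a}_u^H\bm{a}_v|}{\|\bm{a}_u\|\,\|\bm{a}_v\|}$. Then the optimal value $\gamma^*$ of the problem is $$\gamma^*=\begin{cases}\dfrac{\gamma_0 P_{\max}M}{x^2+H^2}, & \text{if } \dfrac{MP_{\max}\rho^2}{(D-x)^2+H^2}\ge\tilde{\Gamma},\\[2ex] g(x), & \text{otherwise,}\end{cases}$$ where $$g(x)=\frac{\gamma_0\big((D-x)^2+H^2\big)\left(\rho\sqrt{\tilde{\Gamma}}+\sqrt{1-\rho^2}\s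qrt{\dfrac{MP_{\max}}{(D-x)^2+H^2}-\tilde{\Gamma}}\right)^2}{x^2+H^2}.$$
   Context: Setting: a UAV with a uniform linear array of $M$ antennas (half-wavelength spacing $d=\lambda/2$) is at horizontal position $x$ and altitude $H$; a single-antenna user is at ground point $\bm{u}=(0,0)$ and a sensing target at ground point $\bm{v}=(D,0)$. The array response vector toward a ground point $\bm{p}$ is $\bm{a}(x,\bm{p})=[1,e^{j\pi\sin\theta},\dots,e^{j\pi(M-1)\sin\theta}]^T$, where $\theta$ is the elevation angle of the path from the UAV to $\bm{p}$; for the user $\sin\theta=H/\sqrt{x^2+H^2}$ and for the target $\sin\theta=H/\sqrt{(D-x)^2+H^2}$. Thus $\|\bm{a}_u\|^2=\|\bm{a}_v\|^2=M$. The channel to the user is line-of-sight with power gain $\beta_0/(x^2+H^2)$ ($\beta_0$ = reference channel power at 1 m), with the phase factor $e^{-j2\pi\sqrt{x^2+H^2}/\lambda}$. The objective is the user SNR with precoder $\bm{w}$ and noise power $\sigma^2$; the first constraint requires the transmit beam pattern gain $|\bm{a}_v^H\bm{w}|^2$ toward the target to be at least $((D-x)^2+H^2)\tilde{\Gamma}$; the second is a transmit power budget. *)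

(* Defs.v *)
From HB Require Import structures.
From mathcomp Require Import all_boot all_order all_algebra.
From mathcomp Require Import complex.
From mathcomp Require Import reals trigo.
Set Implicit Arguments. Unset Strict Implicit. Unset Printing Implicit Defensive.
Import Order.TTheory GRing.Theory Num.Theory.
Local Open Scope ring_scope.

Section Defs.
Variable R : realType.
Local Notation C := R[i].

Definition expj (t : R) : C := Complex (cos t) (sin t).

Definition cabs2 (z : C) : R := let: Complex a b := z in a ^+ 2 + b ^+ 2.

Definition cconj (z : C) : C := let: Complex a b := z in Complex a (- b).

Definition dotH (M : nat) (a w : 'cV[C]_M) : C :=
  \sum_(i < M) cconj (a i 0) * w i 0.

Definition vnorm2 (M : nat) (w : 'cV[C]_M) : R := \sum_(i < M) cabs2 (w i 0).

(* ULA response vector with half-wavelength spacing, sin(theta) = s *)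
Definition steer (M : nat) (s : R) : 'cV[C]_M :=
  \col_(m < M) expj (pi * m%:R * s).

(* user at (0,0), target at (D,0), UAV at horizontal position x, altitude H *)
Definition a_u (M : nat) (x H : R) : 'cV[C]_M :=
  steer M (H / Num.sqrt (x ^+ 2 + H ^+ 2)).
Definition a_v (M : nat) (x H D : R) : 'cV[C]_M :=
  steer M (H / Num.sqrt ((D - x) ^+ 2 + H ^+ 2)).

Definition h_c (M : nat) (x H beta0 phi : R) : 'cV[C]_M :=
  (Complex (Num.sqrt (beta0 / (x ^+ 2 + H ^+ 2))) 0 * expj phi) *: a_u M x H.

Definition rho (M : nat) (x H D : R) : R :=
  Num.sqrt (cabs2 (dotH (a_u M x H) (a_v M x H D))) /
  (Num.sqrt (vnorm2 (a_u M x H)) * Num.sqrt (vnorm2 (a_v M x H D))).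

Definition snr (M : nat) (x H beta0 phi sigma2 : R) (w : 'cV[C]_M) : R :=
  cabs2 (dotH (h_c M x H beta0 phi) w) / sigma2.

Definition feasible (M : nat) (x H D Gam Pmax : R) (w : 'cV[C]_M) : Prop :=
  cabs2 (dotH (a_v M x H D) w) / ((D - x) ^+ 2 + H ^+ 2) >= Gam /\
  vnorm2 w <= Pmax.

Definition gamma_star (M : nat) (x H D beta0 sigma2 Pmax Gam : R) : R :=
  let gamma0 := beta0 / sigma2 in
  let dv := (D - x) ^+ 2 + H ^+ 2 in
  let du := x ^+ 2 + H ^+ 2 in
  let r := rho M x H D in
  if M%:R * Pmax * r ^+ 2 / dv >= Gam then gamma0 * Pmax * M%:R / du
  else gamma0 * dv *
       (r * Num.sqrt Gam + Num.sqrt (1 - r ^+ 2) *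
          Num.sqrt (M%:R * Pmax / dv - Gam)) ^+ 2 / du.

End Defs.

(* Main.v *)
Require Import Defs.
From HB Require Import structures.
From mathcomp Require Import all_boot all_order all_algebra.
From mathcomp Require Import complex.
From mathcomp Require Import reals trigo.
From mathcomp Require Import ring lra.
Set Implicit Arguments. Unset Strict Implicit. Unset Printing Implicit Defensive.
Import Order.TTheory GRing.Theory Num.Theory.
Local Open Scope ring_scope.

Section Aux.
Variable R : realType.
Local Notation C := R[i].
Local Open Scope complex_scope.
Local Open Scope ring_scope.

Lemma cconjE (z : C) : cconj z = z^*%C.
Proof. by case: z. Qed.

Lemma cabs2E (z : C) : (cabs2 z)%:C = z * z^*%C.
Proof.
case: z => a b /=; apply/eqP; rewrite eq_complex /=; apply/andP; split; apply/eqP; ring.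
Qed.

Lemma cabs2_ge0 (z : C) : 0 <= cabs2 z.
Proof. case: z => a b /=; apply: addr_ge0; exact: sqr_ge0. Qed.

Lemma RCinj (a b : R) : a%:C = b%:C :> C -> a = b.
Proof. by case. Qed.

Lemma cabs2M (a b : C) : cabs2 (a * b) = cabs2 a * cabs2 b.
Proof. apply: RCinj; rewrite rmorphM /= !cabs2E rmorphM /=; ring. Qed.

Lemma cabs2J (a : C) : cabs2 (a^*%C) = cabs2 a.
Proof. apply: RCinj; rewrite !cabs2E conjcK; ring. Qed.

Lemma cabs2R (a : R) : cabs2 (a%:C) = a ^+ 2.
Proof. by rewrite /= expr0n /= addr0. Qed.

Lemma cabs2_expj (t : R) : cabs2 (expj t) = 1.
Proof. exact: cos2Dsin2. Qed.

Variable M : nat.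
Implicit Types (a b w : 'cV[C]_M).

Lemma dotHDr a w1 w2 : dotH a (w1 + w2) = dotH a w1 + dotH a w2.
Proof. rewrite /dotH -big_split; apply: eq_bigr => i _; by rewrite !mxE mulrDr. Qed.
Lemma dotHDl a1 a2 w : dotH (a1 + a2) w = dotH a1 w + dotH a2 w.
Proof. rewrite /dotH -big_split; apply: eq_bigr => i _; by rewrite !mxE !cconjE rmorphD mulrDl. Qed.
Lemma dotHBr a w1 w2 : dotH a (w1 - w2) = dotH a w1 - dotH a w2.
Proof. rewrite /dotH -sumrB; apply: eq_bigr => i _; rewrite !mxE; ring. Qed.
Lemma dotHBl a1 a2 w : dotH (a1 - a2) w = dotH a1 w - dotH a2 w.
Proof. rewrite /dotH -sumrB; apply: eq_bigr => i _; rewrite !mxE !cconjE rmorphB /=; ring. Qed.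
Lemma dotHZr a c w : dotH a (c *: w) = c * dotH a w.
Proof. rewrite /dotH mulr_sumr; apply: eq_bigr => i _; rewrite !mxE; ring. Qed.
Lemma dotHZl a c w : dotH (c *: a) w = c^*%C * dotH a w.
Proof. rewrite /dotH mulr_sumr; apply: eq_bigr => i _; rewrite !mxE !cconjE rmorphM /=; ring. Qed.
Lemma dotHNr a w : dotH a (- w) = - dotH a w.
Proof. by rewrite -scaleN1r dotHZr mulN1r. Qed.
Lemma dotHNl a w : dotH (- a) w = - dotH a w.
Proof. by rewrite -scaleN1r dotHZl rmorphN1 mulN1r. Qed.
Lemma dotHJ a w : (dotH a w)^*%C = dotH w a.
Proof. rewrite /dotH rmorph_sum; apply: eq_bigr => i _; rewrite !cconjE rmorphM /= conjcK; ring. Qed.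
Lemma vnorm2E w : (vnorm2 w)%:C = dotH w w.
Proof. rewrite /vnorm2 rmorph_sum; apply: eq_bigr => i _; rewrite cconjE mulrC; exact: cabs2E. Qed.
Lemma vnorm2_ge0 w : 0 <= vnorm2 w.
Proof. by apply: sumr_ge0 => i _; apply: cabs2_ge0. Qed.


Lemma CS a w : cabs2 (dotH a w) <= vnorm2 a * vnorm2 w.
Proof.
have key t : 0 <= vnorm2 w - t *+ 2 * cabs2 (dotH a w) + t ^+ 2 * cabs2 (dotH a w) * vnorm2 a.
  have h := vnorm2_ge0 (w - (t%:C * dotH a w) *: a).
  suff e : (vnorm2 (w - (t%:C * dotH a w) *: a))%:C =
     (vnorm2 w - t *+ 2 * cabs2 (dotH a w) + t ^+ 2 * cabs2 (dotH a w) * vnorm2 a)%:C.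
    by move/RCinj: e => <-.
  rewrite vnorm2E dotHBl !dotHBr !dotHZl !dotHZr -(dotHJ a w) -!vnorm2E.
  rewrite !(rmorphB, rmorphD, rmorphM, rmorphXn, rmorphMn) /= cabs2E oppr0 complexr0.
  ring.
have X0 := vnorm2_ge0 a; have Y0 := vnorm2_ge0 w; have D0 := cabs2_ge0 (dotH a w).
move: key X0 Y0 D0.
set X := vnorm2 a; set Y := vnorm2 w; set Dd := cabs2 _ => key X0 Y0 D0.
have [Xz|Xpos] := eqVneq X 0.
  rewrite Xz mul0r leNgt; apply/negP => Dpos.
  have := key ((Y + 1) / (2 * Dd)).
  have -> : Y - ((Y + 1) / (2 * Dd)) *+ 2 * Dd + ((Y + 1) / (2 * Dd)) ^+ 2 * Dd * X = -1.
    rewrite Xz; field; by rewrite gt_eqF.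
  lra.
have := key X^-1.
have -> : Y - X^-1 *+ 2 * Dd + X^-1 ^+ 2 * Dd * X = (X * Y - Dd) / X by field.
move=> h; have := mulr_ge0 h X0; rewrite divfK // => h2; lra.
Qed.


Lemma vnorm2Z (c : C) w : vnorm2 (c *: w) = cabs2 c * vnorm2 w.
Proof. apply: RCinj; rewrite rmorphM /= !vnorm2E dotHZl dotHZr cabs2E; ring. Qed.

Lemma cabs2_eq0 (z : C) : cabs2 z = 0 -> z = 0.
Proof.
move=> h; have : z * z^*%C = 0 by rewrite -cabs2E h.
by move/eqP; rewrite mulf_eq0 conjc_eq0 orbb => /eqP.
Qed.

Lemma normcE (z : C) : Normc.normc z = Num.sqrt (cabs2 z). Proof. by case: z. Qed.

Lemma nrmD (a b : C) : Num.sqrt (cabs2 (a + b)) <= Num.sqrt (cabs2 a) + Num.sqrt (cabs2 b).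
Proof. rewrite -!normcE; exact: le_normcD. Qed.

Lemma nrmM (a b : C) : Num.sqrt (cabs2 (a * b)) = Num.sqrt (cabs2 a) * Num.sqrt (cabs2 b).
Proof. by rewrite cabs2M sqrtrM // cabs2_ge0. Qed.

Lemma phase (k : C) : exists ec : C, ec * k^*%C = (Num.sqrt (cabs2 k))%:C /\ ec * ec^*%C = 1.
Proof.
have [->|kn0] := eqVneq k 0.
  exists 1; rewrite conjc0 mulr0 conjc1 mulr1; split => //.
  by rewrite /= expr0n /= addr0 sqrtr0.
have c0 : 0 < cabs2 k.
  rewrite lt_def cabs2_ge0 andbT; apply/eqP => /cabs2_eq0 h; by rewrite h eqxx in kn0.
have n0 : Num.sqrt (cabs2 k) != 0 by rewrite gt_eqF // sqrtr_gt0.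
have nC0 : (Num.sqrt (cabs2 k))%:C != 0 :> C.
  by apply/eqP => -[] /eqP; rewrite (negbTE n0).
have kk : k * k^*%C = (Num.sqrt (cabs2 k))%:C ^+ 2.
  by rewrite -cabs2E -rmorphXn sqr_sqrtr // cabs2_ge0.
set ec := k / (Num.sqrt (cabs2 k))%:C.
have e1 : ec * k^*%C = (Num.sqrt (cabs2 k))%:C.
  rewrite /ec mulrAC kk; field; exact: nC0.
exists ec; split => //.
have e2 : ec^*%C * k = (Num.sqrt (cabs2 k))%:C.
  have := congr1 conjc e1; rewrite rmorphM conjc_real => h; rewrite -h; congr (_ * _); exact: (esym (conjcK k)).
have kk0 : k * k^*%C != 0 by rewrite kk expf_neq0.
apply: (mulIf kk0); rewrite mul1r.
have -> : ec * ec^*%C * (k * k^*%C) = (ec * k^*%C) * (ec^*%C * k) by ring.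
by rewrite e1 e2 kk expr2.
Qed.

Lemma phase2 (k : C) : exists ec : C,
  [/\ ec != 0, ec^*%C = ec^-1, k^*%C = (Num.sqrt (cabs2 k))%:C / ec &
      k = (Num.sqrt (cabs2 k))%:C * ec].
Proof.
have [ec [e1 hee]] := phase k.
have ecn : ec != 0.
  apply/eqP => e0; move: hee; rewrite e0 mul0r => /eqP; by rewrite eq_sym oner_eq0.
have hJ : ec^*%C = ec^-1 by apply: (mulfI ecn); rewrite hee mulfV.
have hkJ : k^*%C = (Num.sqrt (cabs2 k))%:C / ec.
  by apply: (mulfI ecn); rewrite e1 mulrC divfK.
exists ec; split => //.
have := congr1 conjc hkJ; rewrite rmorphM fmorphV.
change (k^*^*%C = (Num.sqrt (cabs2 k))%:C^*%C * (ec^*%C)^-1 -> k = (Num.sqrt (cabs2 k))%:C * ec).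
by rewrite conjcK conjc_real hJ invrK.
Qed.

End Aux.

Lemma steer_norm (R : realType) (M : nat) (s : R) : vnorm2 (steer M s) = M%:R.
Proof.
rewrite /vnorm2 (eq_bigr (fun=> 1)) ?sumr_const ?card_ord //.
by move=> i _; rewrite mxE; apply: cabs2_expj.
Qed.
Lemma sq_le_nonneg (R : realFieldType) (a b : R) : 0 <= b -> a ^+ 2 <= b ^+ 2 -> a <= b.
Proof. move=> b0 h; rewrite leNgt; apply/negP => ab. nra. Qed.

Lemma L1 (R : rcfType) (rho s x x0 T' T np : R) :
  0 <= rho -> 0 <= s -> s ^+ 2 = 1 - rho ^+ 2 -> 0 <= x0 -> x0 <= x ->
  x ^+ 2 <= T' -> T' <= T -> rho ^+ 2 * T <= x0 ^+ 2 -> x0 ^+ 2 <= T ->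
  np <= rho * x + s * Num.sqrt (T' - x ^+ 2) ->
  np <= rho * x0 + s * Num.sqrt (T - x0 ^+ 2).
Proof.
move=> r0 s0 hs x00 hx hxT hT hr hx0T hnp.
have hb : Num.sqrt (T' - x ^+ 2) <= Num.sqrt (T - x ^+ 2).
  by rewrite ler_sqrt ?subr_ge0; [lra| lra].
set b := Num.sqrt (T - x ^+ 2) in hb.
set b0 := Num.sqrt (T - x0 ^+ 2).
have b2 : b ^+ 2 = T - x ^+ 2 by rewrite sqr_sqrtr // subr_ge0; lra.
have b02 : b0 ^+ 2 = T - x0 ^+ 2 by rewrite sqr_sqrtr // subr_ge0; lra.
have bp : 0 <= b by apply: sqrtr_ge0.
have b0p : 0 <= b0 by apply: sqrtr_ge0.
have h1 : rho * b0 <= s * x0.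
  apply: sq_le_nonneg; first by apply: mulr_ge0.
  rewrite !exprMn b02 hs; nra.
have h2 : rho * b <= s * x.
  apply: sq_le_nonneg; first by apply: mulr_ge0 => //; lra.
  rewrite !exprMn b2 hs; nra.
have key : rho * x + s * b <= rho * x0 + s * b0.
  have [bz|bpos] := eqVneq (b0 + b) 0.
    have bz0 : b0 = 0 by lra.
    have bz1 : b = 0 by lra.
    have : x ^+ 2 = x0 ^+ 2 by move: b2 b02; rewrite bz0 bz1 expr0n /=; lra.
    move=> e; have : x = x0 by nra.
    move=> ->; rewrite bz0 bz1; lra.
  have bpos' : 0 < b0 + b by rewrite lt_def bpos /=; lra.
  have e : (b0 + b) * (rho * x + s * b - (rho * x0 + s * b0)) =
           (x - x0) * (rho * (b0 + b) - s * (x + x0)).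
    have -> : (x - x0) * (rho * (b0 + b) - s * (x + x0)) =
      (x - x0) * rho * (b0 + b) - s * (x ^+ 2 - x0 ^+ 2) by ring.
    have -> : x ^+ 2 - x0 ^+ 2 = b0 ^+ 2 - b ^+ 2 by rewrite b2 b02; ring.
    ring.
  have : (b0 + b) * (rho * x + s * b - (rho * x0 + s * b0)) <= 0.
    rewrite e; apply: mulr_ge0_le0; lra.
  move=> h; rewrite -subr_le0; move: h; rewrite pmulr_rle0 //.
have : s * Num.sqrt (T' - x ^+ 2) <= s * b by apply: ler_wpM2l.
lra.
Qed.

Local Open Scope complex_scope.
Local Open Scope ring_scope.

Lemma snr_eq (R : realType) (M : nat) (x H beta0 phi sigma2 : R) (w : 'cV[R[i]]_M) :
  0 < H -> 0 <= beta0 ->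
  snr x H beta0 phi sigma2 w = beta0 / (x ^+ 2 + H ^+ 2) * cabs2 (dotH (a_u M x H) w) / sigma2.
Proof.
move=> H0 b0.
have du0 : 0 < x ^+ 2 + H ^+ 2 by have := sqr_ge0 x; have := exprn_gt0 2 H0; lra.
rewrite /snr /h_c dotHZl cabs2M cabs2J cabs2M cabs2R cabs2_expj sqr_sqrtr ?mulr1 //.
by apply: divr_ge0 => //; apply: ltW.
Qed.

Lemma rho_eq (R : realType) (M : nat) (x H D : R) :
  rho M x H D = Num.sqrt (cabs2 (dotH (a_v M x H D) (a_u M x H))) / M%:R.
Proof.
rewrite /rho -(dotHJ (a_v M x H D)) cabs2J /a_u /a_v !steer_norm -expr2 sqr_sqrtr ?ler0n //.
Qed.

Theorem proposition1 (R : realType) (M : nat) (H D x beta0 sigma2 Pmax Gam phi : R) :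
  (0 < M)%N -> 0 < H -> 0 < D -> 0 < beta0 -> 0 < sigma2 -> 0 < Pmax -> 0 < Gam ->
  M%:R * Pmax / ((D - x) ^+ 2 + H ^+ 2) >= Gam ->
  (exists w : 'cV[R[i]]_M, feasible x H D Gam Pmax w /\
     snr x H beta0 phi sigma2 w = gamma_star M x H D beta0 sigma2 Pmax Gam) /\
  (forall w : 'cV[R[i]]_M, feasible x H D Gam Pmax w ->
     snr x H beta0 phi sigma2 w <= gamma_star M x H D beta0 sigma2 Pmax Gam).
Proof.
move=> M0 H0 D0 b0 s0 P0 G0 hfeas.
have snrE := fun w => @snr_eq R M x H beta0 phi sigma2 w H0 (ltW b0).
rewrite /gamma_star /= rho_eq.
rewrite /feasible.
have du0 : 0 < x ^+ 2 + H ^+ 2 by have := sqr_ge0 x; have := exprn_gt0 2 H0; lra.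
have dv0 : 0 < (D - x) ^+ 2 + H ^+ 2 by have := sqr_ge0 (D - x); have := exprn_gt0 2 H0; lra.
move: snrE hfeas du0 dv0.
set du := x ^+ 2 + H ^+ 2; set dv := (D - x) ^+ 2 + H ^+ 2.
set u := a_u M x H; set v := a_v M x H D; set Mr := M%:R.
move=> snrE hfeas du0 dv0.
have Mr0 : 0 < Mr by rewrite ltr0n.
have hu : vnorm2 u = Mr by apply: steer_norm.
have hv : vnorm2 v = Mr by apply: steer_norm.
have huu : dotH u u = Mr%:C by rewrite -vnorm2E hu.
have hvv : dotH v v = Mr%:C by rewrite -vnorm2E hv.
set k := dotH v u.
have hk : dotH u v = k^*%C by rewrite /k dotHJ.
have K0 := cabs2_ge0 k.
set nk := Num.sqrt (cabs2 k).
have nk0 : 0 <= nk by apply: sqrtr_ge0.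
have hnk2 : nk ^+ 2 = cabs2 k by rewrite sqr_sqrtr.
set r := nk / Mr.
have r0 : 0 <= r by apply: divr_ge0 => //; apply: ltW.
case: ifP => hc.
- have Mrn : Mr != 0 by rewrite gt_eqF.
  have dvn : dv != 0 by rewrite gt_eqF.
  have dun : du != 0 by rewrite gt_eqF.
  have sn : sigma2 != 0 by rewrite gt_eqF.
  split.
  + pose c : R[i] := (Num.sqrt (Pmax / Mr))%:C.
    have hc2 : cabs2 c = Pmax / Mr.
      by rewrite /c cabs2R sqr_sqrtr // divr_ge0 // ltW.
    exists (c *: u); split; [split|].
    * rewrite dotHZr cabs2M hc2 -/k -hnk2.
      have -> : Pmax / Mr * nk ^+ 2 / dv = Mr * Pmax * r ^+ 2 / dv.
        by rewrite /r; field; do ?(apply/andP; split).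
      by rewrite hc.
    * by rewrite vnorm2Z hc2 hu divfK.
    * rewrite snrE dotHZr huu cabs2M hc2 cabs2R; field; by do ?(apply/andP; split).
  + move=> w [hq hw]; rewrite snrE.
    have hcs := CS u w; rewrite hu in hcs.
    have e1 : beta0 / du * cabs2 (dotH u w) / sigma2 = beta0 / (du * sigma2) * cabs2 (dotH u w).
      by field; do ?(apply/andP; split).
    have e2 : beta0 / sigma2 * Pmax * Mr / du = beta0 / (du * sigma2) * (Mr * Pmax).
      by field; do ?(apply/andP; split).
    rewrite e1 e2; apply: ler_wpM2l.
      by apply: divr_ge0; [apply: ltW | apply: mulr_ge0; apply: ltW].
    apply: (le_trans hcs); apply: ler_wpM2l => //; apply: ltW.
- have Mrn : Mr != 0 by rewrite gt_eqF.
  have dvn : dv != 0 by rewrite gt_eqF.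
  have dun : du != 0 by rewrite gt_eqF.
  have sn : sigma2 != 0 by rewrite gt_eqF.
  have hlt : Mr * Pmax * r ^+ 2 / dv < Gam by rewrite ltNge hc.
  have G0' : 0 <= Gam * dv by apply: mulr_ge0; apply: ltW.
  have hG : Gam * dv <= Mr * Pmax by move: hfeas; rewrite ler_pdivlMr.
  have hrG : Mr * Pmax * r ^+ 2 < Gam * dv by move: hlt; rewrite ltr_pdivrMr.
  set G := Gam * dv in G0' hG hrG.
  have MP0 : 0 < Mr * Pmax by apply: mulr_gt0.
  have hr1 : r ^+ 2 < 1 by nra.
  have nkr : nk = r * Mr by rewrite /r divfK.
  have hK : cabs2 k < Mr ^+ 2.
    rewrite -hnk2 nkr exprMn -[X in _ < X]mul1r ltr_pM2r ?exprn_gt0 //.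
  set sK := Num.sqrt (Mr ^+ 2 - cabs2 k).
  have sK0 : 0 < sK by rewrite sqrtr_gt0 subr_gt0.
  have sK2 : sK ^+ 2 = Mr ^+ 2 - cabs2 k by rewrite sqr_sqrtr // subr_ge0 ltW.
  have hs : Num.sqrt (1 - r ^+ 2) = sK / Mr.
    have e : 1 - r ^+ 2 = (Mr ^+ 2 - cabs2 k) / Mr ^+ 2.
      by rewrite /r -hnk2; field.
    rewrite e sqrtrM ?subr_ge0 ?ltW // sqrtrV ?sqr_ge0 // sqrtr_sqr ger0_norm // ltW.
  set s := Num.sqrt (1 - r ^+ 2) in hs *.
  have s0' : 0 <= s by apply: sqrtr_ge0.
  have hs2 : s ^+ 2 = 1 - r ^+ 2 by rewrite sqr_sqrtr // subr_ge0 ltW.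
  set t := Num.sqrt (Mr * Pmax / dv - Gam).
  set x0 := Num.sqrt G.
  set y0 := Num.sqrt (Mr * Pmax - G).
  have x00 : 0 <= x0 by apply: sqrtr_ge0.
  have y00 : 0 <= y0 by apply: sqrtr_ge0.
  have x02 : x0 ^+ 2 = G by rewrite sqr_sqrtr.
  have y02 : y0 ^+ 2 = Mr * Pmax - G by rewrite sqr_sqrtr // subr_ge0.
  have hx0 : x0 = Num.sqrt Gam * Num.sqrt dv by rewrite /x0 /G sqrtrM // ltW.
  have hy0 : y0 = Num.sqrt dv * t.
    rewrite /y0 /t -sqrtrM ?ltW //; congr Num.sqrt; rewrite /G; field; done.
  have hZ : dv * (r * Num.sqrt Gam + s * t) ^+ 2 = (r * x0 + s * y0) ^+ 2.
    rewrite hx0 hy0.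
    have sd : Num.sqrt dv ^+ 2 = dv by rewrite sqr_sqrtr // ltW.
    transitivity (Num.sqrt dv ^+ 2 * (r * Num.sqrt Gam + s * t) ^+ 2); first by rewrite sd.
    ring.
  have eT : beta0 / sigma2 * dv * (r * Num.sqrt Gam + s * t) ^+ 2 / du =
            beta0 / (du * sigma2) * (r * x0 + s * y0) ^+ 2.
    rewrite -hZ; field; by do ?(apply/andP; split).
  rewrite eT.
  have cpos : 0 <= beta0 / (du * sigma2).
    by apply: divr_ge0; [apply: ltW | apply: mulr_ge0; apply: ltW].
  split.
  + have [ec [ecn hecJ hkJ hkE]] := phase2 k.
    rewrite -/nk in hkJ hkE.
    have sKn : sK != 0 by rewrite gt_eqF.
    have sK2' : Mr ^+ 2 - nk ^+ 2 = sK ^+ 2 by rewrite hnk2 sK2.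
    pose a := x0 / Mr; pose b := y0 / (Mr * sK).
    have hA : a * nk + b * (Mr ^+ 2 - nk ^+ 2) = r * x0 + s * y0.
      by rewrite /a /b hs /r sK2'; field; do ?(apply/andP; split).
    have hB : a ^+ 2 * Mr + b ^+ 2 * (Mr * (Mr ^+ 2 - nk ^+ 2)) = Pmax.
      rewrite sK2' /a /b.
      have -> : (x0 / Mr) ^+ 2 * Mr + (y0 / (Mr * sK)) ^+ 2 * (Mr * sK ^+ 2) =
                (x0 ^+ 2 + y0 ^+ 2) / Mr by field; do ?(apply/andP; split).
      by rewrite x02 y02; field.
    have hC : a ^+ 2 * Mr ^+ 2 = G by rewrite /a -x02; field.
    clearbody a b.
    set w := a%:C *: (ec *: v) + b%:C *: (Mr%:C *: u - k *: v).
    exists w.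
    have hq : dotH v w = a%:C * ec * Mr%:C.
      rewrite /w dotHDr !dotHZr dotHBr !dotHZr hvv -/k; ring.
    have hp : dotH u w = (a * nk + b * (Mr ^+ 2 - nk ^+ 2))%:C.
      rewrite /w dotHDr !dotHZr dotHBr !dotHZr huu hk hkJ hkE.
      field; by do ?(apply/andP; split).
    have hce : cabs2 ec = 1.
      by apply: RCinj; rewrite cabs2E hecJ mulfV.
    have hcq : cabs2 (dotH v w) = G.
      by rewrite hq !cabs2M !cabs2R hce mulr1.
    split; [split|].
    * by rewrite hcq /G mulfK.
    * have : (vnorm2 w)%:C = Pmax%:C.
        rewrite -hB vnorm2E /w !(dotHDl, dotHDr, dotHNl, dotHNr, dotHZl, dotHZr).
        rewrite huu hvv hk -/k hkJ hkE hecJ !conjc_real.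
        field; by do ?(apply/andP; split).
      by move/RCinj => ->.
    * rewrite snrE hp cabs2R hA; field; by do ?(apply/andP; split).
  + move=> w [hq hw]; rewrite snrE.
    have e1 : beta0 / du * cabs2 (dotH u w) / sigma2 = beta0 / (du * sigma2) * cabs2 (dotH u w).
      by field; do ?(apply/andP; split).
    rewrite e1; apply: ler_wpM2l => //.
    have hQ : G <= cabs2 (dotH v w) by move: hq; rewrite ler_pdivlMr.
    set p := dotH u w in e1 *; set q := dotH v w in hQ hq *; set W := vnorm2 w in hw *.
    set u' := Mr%:C *: u - k *: v.
    set w' := Mr%:C *: w - q *: v.
    have e2 : dotH u' w' = Mr%:C * (Mr%:C * p - q * k^*%C).
      rewrite /u' /w' dotHBl !dotHBr !dotHZl !dotHZr ?huu ?hvv ?hk -?/p -?/q conjc_real; ring.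
    have e3 : vnorm2 u' = Mr * (Mr ^+ 2 - cabs2 k).
      apply: RCinj; rewrite vnorm2E /u' dotHBl !dotHBr !dotHZl !dotHZr huu hvv hk -/k conjc_real.
      rewrite !(rmorphM, rmorphB, rmorphXn) /= cabs2E; ring.
    have e4 : vnorm2 w' = Mr * (Mr * W - cabs2 q).
      apply: RCinj; rewrite vnorm2E /w' dotHBl !dotHBr !dotHZl !dotHZr hvv -(dotHJ v w) -/q.
      rewrite -vnorm2E -/W conjc_real.
      rewrite !(rmorphM, rmorphB, rmorphXn) /= cabs2E; ring.
    have hcs := CS u' w'.
    rewrite e2 cabs2M cabs2R e3 e4 in hcs.
    set E := cabs2 (Mr%:C * p - q * k^*%C) in hcs.
    have hW0 : 0 <= Mr * W - cabs2 q.
      by have := vnorm2_ge0 w'; rewrite e4 pmulr_rge0.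
    have hE : E <= (Mr ^+ 2 - cabs2 k) * (Mr * W - cabs2 q).
      have e5 : Mr * (Mr ^+ 2 - cabs2 k) * (Mr * (Mr * W - cabs2 q)) =
         Mr ^+ 2 * ((Mr ^+ 2 - cabs2 k) * (Mr * W - cabs2 q)) by ring.
      by rewrite e5 ler_pM2l ?exprn_gt0 in hcs.
    set np := Num.sqrt (cabs2 p); set nq := Num.sqrt (cabs2 q).
    have np0 : 0 <= np by apply: sqrtr_ge0.
    have htri : Mr * np <= Num.sqrt E + nq * nk.
      have := nrmD (Mr%:C * p - q * k^*%C) (q * k^*%C).
      rewrite subrK nrmM nrmM cabs2R sqrtr_sqr (ger0_norm (ltW Mr0)) cabs2J.
      by rewrite -/np -/nq -/nk -/E.
    have hsE : Num.sqrt E <= sK * Num.sqrt (Mr * W - nq ^+ 2).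
      have hK0 : 0 <= Mr ^+ 2 - cabs2 k by rewrite subr_ge0 ltW.
      rewrite /nq sqr_sqrtr ?cabs2_ge0 // /sK -(sqrtrM _ hK0).
      rewrite ler_sqrt //; apply: mulr_ge0 => //; rewrite subr_ge0 ltW //.
    have hnp : np <= r * nq + s * Num.sqrt (Mr * W - nq ^+ 2).
      rewrite hs /r.
      have -> : nk / Mr * nq + sK / Mr * Num.sqrt (Mr * W - nq ^+ 2) =
        (nk * nq + sK * Num.sqrt (Mr * W - nq ^+ 2)) / Mr by field.
      rewrite ler_pdivlMr //; lra.
    have hx0q : x0 <= nq by rewrite /x0 /nq ler_sqrt // cabs2_ge0.
    have nq2 : nq ^+ 2 = cabs2 q by rewrite sqr_sqrtr // cabs2_ge0.
    have hL := L1 r0 s0' hs2 x00 hx0q.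
    have := hL (Mr * W) (Mr * Pmax) np.
    rewrite x02 -/y0 => hfin.
    have hfin2 : np <= r * x0 + s * y0.
      apply: hfin => //.
      * rewrite nq2; lra.
      * by rewrite ler_pM2l.
      * by rewrite mulrC; apply: ltW.
    have -> : cabs2 p = np ^+ 2 by rewrite sqr_sqrtr // cabs2_ge0.
    have : 0 <= r * x0 + s * y0 by lra.
    nra.
Qed.
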